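(* Let $m>n$ be coprime positive integers, $\lambda\in X$, $\Lambda=x(\lambda)$ and $\alpha=\epsilon_i-\delta_j$ ($i\in[n]$, $j\in[m]$). If $\Lambda\in\Pi_{-\alpha}$, then either $\lambda\in X_{-\alpha}$, or $\alpha=\epsilon_1-\delta_m$ and $\lambda_n=\lambda'_m=0$.
   Context: $X$ is the set of partitions $\lambda=(\lambda_1\ge\dots\ge\lambda_n\ge0)$ with $\lambda_1\le m$, drawn in an $n\times m$ rectangle with rows $\epsilon_1,\dots,\epsilon_n$ top to bottom and columns $\delta_1,\dots,\delta_m$; the diagram consists of boxes $\epsilon_i-\delta_j$ with $j\le\lambda_{n+1-i}$; $\lambda'_j=\#\{i:\lambda_i\ge j\}$. $X_{-\alpha}$ is the set of $\lambda$ for which the box $\alpha$ is an inner corner (in $\lambda$, and removing it gives an element of $X$). $x(\lambda)=(a_1,\dots,a_n|b_1,\dots,b_m)$ with $a_i=m(n-i)+n\lambda_{n+1-i}$, $b_j=n(j-1)+m\lambda'_j$. $\Pi_{-\alpha}=\{\Lambda: a_i-b_j=n-m\}$. *)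

(* Defs.v *)
From mathcomp Require Import all_boot all_order all_algebra.
Set Implicit Arguments. Unset Strict Implicit. Unset Printing Implicit Defensive.

(* Partitions lambda = (lambda_1 >= ... >= lambda_n >= 0) are encoded as
   functions lam : nat -> nat using 1-based indices 1..n; values outside
   [1, n] are irrelevant (nothing below depends on them). *)

Definition inX (n m : nat) (lam : nat -> nat) : Prop :=
  (forall i, 1 <= i -> i < n -> lam i.+1 <= lam i) /\ (0 < n -> lam 1 <= m).

(* box eps_i - delta_j (row i from the top, column j) is in the diagram of lam:
   j <= lambda_{n+1-i} *)
Definition in_diag (n : nat) (lam : nat -> nat) (i j : nat) : Prop :=
  [/\ 1 <= i <= n, 1 <= j & j <= lam (n.+1 - i)].

Definition conjp (n : nat) (lam : nat -> nat) (j : nat) : nat :=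
  count (fun i => j <= lam i) (iota 1 n).

Definition xa (n m : nat) (lam : nat -> nat) (i : nat) : int :=
  (m * (n - i) + n * lam (n.+1 - i))%:Z.
Definition xb (n m : nat) (lam : nat -> nat) (j : nat) : int :=
  (n * (j - 1) + m * conjp n lam j)%:Z.

Definition inPi (n m : nat) (lam : nat -> nat) (i j : nat) : Prop :=
  (xa n m lam i - xb n m lam j = n%:Z - m%:Z)%R.

Definition inXminus (n m : nat) (lam : nat -> nat) (i j : nat) : Prop :=
  in_diag n lam i j /\
  exists mu : nat -> nat, inX n m mu /\
    forall i' j', in_diag n mu i' j' <-> (in_diag n lam i' j' /\ (i', j') <> (i, j)).

(* Main.v *)
Require Import Defs.
From mathcomp Require Import all_boot all_order all_algebra.
From mathcomp Require Import zify.

Lemma mono_lam (n : nat) (lam : nat -> nat) :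
  (forall i, 1 <= i -> i < n -> lam i.+1 <= lam i) ->
  forall a b, 1 <= a -> a <= b -> b <= n -> lam b <= lam a.
Proof.
move=> H a b ha; elim: b => [|b IH] hab hb; first lia.
case: (ltngtP a b.+1) => h; [|lia|by rewrite h].
apply: leq_trans (IH _ _); [apply: H|..]; lia.
Qed.

Lemma count_ge (n : nat) (lam : nat -> nat) j r :
  (forall k, 1 <= k -> k <= r -> j <= lam k) -> r <= n ->
  r <= conjp n lam j.
Proof.
move=> H hr; rewrite /conjp -(subnKC hr) iotaD count_cat.
have: all (fun k => j <= lam k) (iota 1 r).
  apply/allP => k; rewrite mem_iota => /andP[h1 h2]; apply: H; lia.
rewrite all_count => /eqP ->; rewrite size_iota; lia.
Qed.

Lemma conj_le (n : nat) (lam : nat -> nat) j : conjp n lam j <= n.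
Proof. by rewrite /conjp -[X in _ <= X](size_iota 1 n) count_size. Qed.

Theorem lemma4p6 (n m : nat) (lam : nat -> nat) (i j : nat) :
  0 < n -> n < m -> coprime m n ->
  inX n m lam ->
  1 <= i <= n -> 1 <= j <= m ->
  inPi n m lam i j ->
  inXminus n m lam i j \/
  [/\ i = 1, j = m, lam n = 0 & conjp n lam m = 0].
Proof.
move=> n0 nm cop [Hdec H1] /andP[i1 iN] /andP[j1 jM] HP.
have Hmono := @mono_lam n lam Hdec.
set r := n.+1 - i.
set L := lam r.
set c := conjp n lam j.
have r1 : 1 <= r by rewrite /r; lia.
have rn : r <= n by rewrite /r; lia.
have Lm : L <= m by apply: leq_trans (H1 n0); apply: Hmono.
have cn : c <= n := conj_le n lam j.
have E : m * r + n * L = n * j + m * c.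
  move: HP; rewrite /inPi /xa /xb -/r -/L -/c => HP.
  have E1 : m * (n - i) + n * L + m = n * (j - 1) + m * c + n by lia.
  have -> : r = (n - i) + 1 by rewrite /r; lia.
  have -> : j = (j - 1) + 1 by lia.
  rewrite mulnDr mulnDr !muln1; lia.
have [rc|cr] := leqP c r.
- have E2 : m * (r - c) = n * (j - L).
    rewrite !mulnBr; lia.
  have Hd : n %| r - c.
    by rewrite -(@Gauss_dvdr n m _ (ltac:(by rewrite coprime_sym))) E2 dvdn_mulr.
  have [rc0|rcpos] := posnP (r - c).
  +
    have jL : j = L.
      have Lj : L <= j by case: (leqP L j) => // h; have := leq_mul (leqnn m) rc; have := ltn_mul2l n j L; rewrite h n0 /=; lia.
      move: E2; rewrite rc0 muln0 => /esym/eqP; rewrite muln_eq0 => /orP[] /eqP; [lia|]. rewrite /L; lia.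
    have rc' : r = c by lia.
    left.
    have Hnext : r < n -> lam r.+1 < j.
      move=> hrn; rewrite ltnNge; apply/negP => hj.
      suff : r.+1 <= c by lia.
      apply: count_ge => // k k1 kr; case: (ltngtP k r.+1) => h; [|lia|by rewrite h].
      apply: leq_trans (Hmono k r _ _ _); lia.
    split.
      rewrite /in_diag -/r; split => //; lia.
    exists (fun k => if k == r then (lam k).-1 else lam k).
    split.
      split.
        move=> k k1 kn /=.
        case: (eqVneq k.+1 r) => h1; case: (eqVneq k r) => h2; try lia.
        * have := Hdec k k1 kn; lia.
        * subst k; have := Hnext (ltac:(lia)); lia.
        * exact: Hdec.
      move=> _ /=; case: (eqVneq 1 r) => h; last exact: H1.
      have := H1 n0; lia.
    move=> i' j'; rewrite /in_diag /=.
    case: (eqVneq (n.+1 - i') r) => h.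
      have ei : i' = i by rewrite /r in h; lia.
      rewrite ei -/r -/L; split.
        case=> a b c'; split; [split => //; lia | ]. move=> [e]. lia.
      case=> [[a b c']] ne; have nj : j' <> j by move=> e; apply: ne; rewrite e.
      split => //; lia.
    split.
      case=> a b c'; split; [by split | case=> e _; move: h; by rewrite e -/r eqxx].
    by case=> [[a1 b1 c1]] _.
  + right.
    have rcn : r - c = n.
      have := dvdn_leq rcpos Hd; lia.
    have rN : r = n by lia.
    have c0 : c = 0 by lia.
    have jLm : j - L = m.
      apply/eqP; rewrite -(eqn_pmul2l n0) -E2 rcn mulnC //.
    have jm : j = m by lia.
    have L0 : L = 0 by lia.
    split => //; [rewrite /r in rN; lia | by rewrite -rN | by rewrite -jm].
- exfalso.
  have E2 : n * (L - j) = m * (c - r) by rewrite !mulnBr; lia.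
  have Hd : m %| L - j.
    by rewrite -(Gauss_dvdr _ cop) E2 dvdn_mulr.
  have [z|pos] := posnP (L - j).
    move: E2; rewrite z muln0 => /esym/eqP; rewrite muln_eq0 => /orP[] /eqP; lia.
  have := dvdn_leq pos Hd; lia.
Qed.
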